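(* Let $X$ be a homogeneous chain that is not simple and has no proper regular interval which is a simple chain. Then $(\mathrm{Aut}(X),\tau_p)$ is Roelcke precompact if and only if for every proper regular interval $J$ of $X$ the group $(\mathrm{Aut}(X/J),\tau_\partial)$ is Roelcke precompact.
   Context: Chain: linearly ordered set; $\mathrm{Aut}(Y)$: order-preserving bijections; homogeneous: $\mathrm{Aut}(X)$ transitive. An interval is a convex subset; $J$ is regular if for all $x,y\in J$, $g\in\mathrm{Aut}(X)$, $g(x)\in J\Rightarrow g(y)\in J$; proper if neither a singleton nor $X$. A homogeneous chain is simple if it has no proper regular interval. For a proper regular interval $J$, $X/J$ is the chain of equivalence classes of $x\sim_J y\iff\forall g\in\mathrm{Aut}(X)\,(g(x)\in J\Rightarrow g(y)\in J)$, with the induced order. $\tau_p$: topology of pointwise convergence w.r.t. the order topology on $X$; $\tau_\partial$: permutation topology (identity neighbourhood base: pointwise stabilizers of finite sets). Roelcke precompact: the Roelcke uniformity (greatest lower bound of left and right uniformities) is totally bounded. *)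

(* Defs.v *)
From Stdlib Require Import List.
Import ListNotations.
Set Implicit Arguments.

Section Chains.
Context {T : Type} (lt : T -> T -> Prop).

Definition is_chain : Prop :=
  (forall x, ~ lt x x) /\
  (forall x y z, lt x y -> lt y z -> lt x z) /\
  (forall x y, lt x y \/ x = y \/ lt y x).

Definition is_aut (f : T -> T) : Prop :=
  (exists g : T -> T, (forall x, g (f x) = x) /\ (forall y, f (g y) = y)) /\
  (forall x y, lt x y -> lt (f x) (f y)).

Definition homogeneous : Prop :=
  forall x y, exists g, is_aut g /\ g x = y.

Definition interval (J : T -> Prop) : Prop :=
  (exists x, J x) /\
  (forall x y z, J x -> J z -> lt x y -> lt y z -> J y).

Definition regular (J : T -> Prop) : Prop :=
  forall x y g, J x -> J y -> is_aut g -> J (g x) -> J (g y).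

Definition proper (J : T -> Prop) : Prop :=
  ~ (exists x, forall y, J y <-> y = x) /\ ~ (forall y, J y).

Definition proper_regular_interval (J : T -> Prop) : Prop :=
  interval J /\ regular J /\ proper J.

Definition simple : Prop :=
  homogeneous /\ forall J, ~ proper_regular_interval J.

Definition above (l : option T) (y : T) : Prop :=
  match l with None => True | Some a => lt a y end.
Definition below (u : option T) (y : T) : Prop :=
  match u with None => True | Some b => lt y b end.

Definition order_open (O : T -> Prop) : Prop :=
  forall x, O x -> exists l u : option T,
    above l x /\ below u x /\ (forall y, above l y -> below u y -> O y).

(** tau_p: identity neighbourhoods in Aut for the topology of pointwise
    convergence w.r.t. the order topology: U contains a basic open set
    {g | g x_i in O_i for all i} with O_i order-open and x_i in O_i. *)
Definition tau_p_nbhd (U : (T -> T) -> Prop) : Prop :=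
  exists s : list (T * (T -> Prop)),
    (forall p, In p s -> order_open (snd p) /\ snd p (fst p)) /\
    (forall g, is_aut g -> (forall p, In p s -> snd p (g (fst p))) -> U g).

(** tau_partial: identity neighbourhoods = sets containing the pointwise
    stabiliser of a finite set. *)
Definition tau_d_nbhd (U : (T -> T) -> Prop) : Prop :=
  exists A : list T,
    forall g, is_aut g -> (forall a, In a A -> g a = a) -> U g.

(** Roelcke precompactness of Aut with respect to a system of identity
    neighbourhoods: for every identity neighbourhood U there is a finite
    F in Aut with Aut = U F U (total boundedness of the Roelcke uniformity). *)
Definition roelcke_precompact (nbhd : ((T -> T) -> Prop) -> Prop) : Prop :=
  forall U, nbhd U ->
    exists F : list (T -> T),
      (forall f, In f F -> is_aut f) /\
      (forall g, is_aut g -> exists u1 u2 f,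
          is_aut u1 /\ U u1 /\ is_aut u2 /\ U u2 /\ In f F /\
          forall x, g x = u1 (f (u2 x))).

Definition simJ (J : T -> Prop) (x y : T) : Prop :=
  forall g, is_aut g -> J (g x) -> J (g y).

Definition quot (J : T -> Prop) : Type :=
  { C : T -> Prop | exists x, C = simJ J x }.

Definition quot_lt (J : T -> Prop) (C D : quot J) : Prop :=
  forall x y, proj1_sig C x -> proj1_sig D y -> lt x y.

End Chains.

Definition sub_lt {T : Type} (lt : T -> T -> Prop) (J : T -> Prop)
  (a b : { x : T | J x }) : Prop := lt (proj1_sig a) (proj1_sig b).
Arguments quot_lt {T} lt J C D.

(* Main.v *)
Require Import Defs.
From Stdlib Require Import List Classical FunctionalExtensionality PropExtensionality ProofIrrelevance ClassicalEpsilon.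
Import ListNotations.

Section Basics.
Context {T : Type} (lt : T -> T -> Prop).
Hypothesis Hch : is_chain lt.

Lemma irr x : ~ lt x x.
Proof. apply (proj1 Hch). Qed.
Lemma trn x y z : lt x y -> lt y z -> lt x z.
Proof. apply (proj1 (proj2 Hch)). Qed.
Lemma tri x y : lt x y \/ x = y \/ lt y x.
Proof. apply (proj2 (proj2 Hch)). Qed.

Lemma aut_id : is_aut lt (fun x => x).
Proof. split; [exists (fun x => x); split; reflexivity | auto]. Qed.

Lemma aut_comp f g : is_aut lt f -> is_aut lt g -> is_aut lt (fun x => f (g x)).
Proof.
  intros [[f' [Hf1 Hf2]] Hf] [[g' [Hg1 Hg2]] Hg]. split.
  - exists (fun y => g' (f' y)). split; intros; [rewrite Hf1; apply Hg1 | rewrite Hg2; apply Hf2].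
  - intros; apply Hf, Hg; assumption.
Qed.

Lemma aut_refl f x y : is_aut lt f -> lt (f x) (f y) -> lt x y.
Proof.
  intros [[f' [H1 H2]] Hf] H.
  destruct (tri x y) as [h|[h|h]]; auto.
  - subst. exfalso; eapply irr; eauto.
  - exfalso. apply (irr (f x)). eapply trn; [exact H| apply Hf; exact h].
Qed.

Lemma aut_inj f x y : is_aut lt f -> f x = f y -> x = y.
Proof. intros [[f' [H1 H2]] Hf] H. rewrite <- (H1 x), <- (H1 y), H. reflexivity. Qed.

Lemma aut_inv f : is_aut lt f ->
  exists g, is_aut lt g /\ (forall x, g (f x) = x) /\ (forall y, f (g y) = y).
Proof.
  intros Hf. pose proof Hf as [[g [H1 H2]] Hm]. exists g. split; [|split; assumption].
  split. - exists f. split; assumption.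
  - intros x y Hxy. apply (aut_refl f); [exact Hf|]. rewrite !H2. exact Hxy.
Qed.

End Basics.

Section Classes.
Context {T : Type} (lt : T -> T -> Prop).
Hypothesis Hch : is_chain lt.
Hypothesis Hhom : homogeneous lt.

Lemma simJ_refl J x : simJ lt J x x.
Proof. intros g _ H; exact H. Qed.
Lemma simJ_trans J x y z : simJ lt J x y -> simJ lt J y z -> simJ lt J x z.
Proof. intros H1 H2 g Hg H. apply H2, H1; assumption. Qed.
Lemma simJ_transport J h x y : is_aut lt h -> simJ lt J x y -> simJ lt J (h x) (h y).
Proof. intros Hh H g Hg. apply (H (fun z => g (h z))). apply aut_comp; assumption. Qed.
Lemma simJ_in J j y : J j -> simJ lt J j y -> J y.
Proof. intros Hj H. apply (H (fun z => z) (aut_id lt) Hj). Qed.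
Lemma simJ_of_in J j y : regular lt J -> J j -> J y -> simJ lt J j y.
Proof. intros R Hj Hy g Hg H. eapply R; eauto. Qed.

Lemma simJ_sym J x y : interval lt J -> regular lt J -> simJ lt J x y -> simJ lt J y x.
Proof.
  intros [[j0 Hj0] _] R H g Hg Hgy.
  destruct (Hhom x j0) as [h [Hh Hhx]].
  destruct (aut_inv lt Hch h Hh) as [hi [Hhi [Hi1 Hi2]]].
  assert (Jhy : J (h y)) by (apply H; [exact Hh| rewrite Hhx; exact Hj0]).
  assert (A : is_aut lt (fun z => g (hi z))) by (apply aut_comp; assumption).
  pose proof (R (h y) (h x) _ Jhy (ltac:(rewrite Hhx; exact Hj0)) A) as R'.
  simpl in R'. rewrite !Hi1 in R'. auto.
Qed.

Lemma class_interval J x : interval lt J -> interval lt (simJ lt J x).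
Proof.
  intros [_ C]. split; [exists x; apply simJ_refl|].
  intros a y b Ha Hb Hay Hyb g Hg Hgx.
  apply (C (g a) (g y) (g b)); auto; apply Hg; assumption.
Qed.

Lemma class_regular J x : interval lt J -> regular lt J -> regular lt (simJ lt J x).
Proof.
  intros I R a b g Ha Hb Hg Hga.
  apply simJ_trans with (g a); [exact Hga|].
  apply simJ_transport; [exact Hg|].
  apply simJ_trans with x; [apply simJ_sym; assumption| exact Hb].
Qed.

Lemma proper_two (J : T -> Prop) : interval lt J -> proper J -> exists a b, J a /\ J b /\ a <> b.
Proof.
  intros [[j Hj] _] [P1 _]. apply NNPP; intro N. apply P1. exists j. intro y; split.
  - intro Hy. apply NNPP; intro Ne. apply N. exists y, j. auto.
  - intros ->; exact Hj.
Qed.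

Lemma proper_out (J : T -> Prop) : proper J -> exists w, ~ J w.
Proof. intros [_ P2]. apply not_all_ex_not. exact P2. Qed.

Lemma class_proper J x : proper_regular_interval lt J -> proper (simJ lt J x).
Proof.
  intros [I [R P]]. pose proof I as [[j0 Hj0] _]. split.
  - intros [c Hc]. destruct (proper_two J I P) as [a [b [Ha [Hb Hab]]]].
    destruct (Hhom a x) as [h [Hh Hhx]].
    assert (E1 : simJ lt J x (h b)).
    { rewrite <- Hhx. apply simJ_transport; [exact Hh|]. apply simJ_of_in; assumption. }
    apply Hc in E1. assert (E2 : x = c) by (apply Hc, simJ_refl).
    apply Hab. apply (aut_inj lt h); auto. congruence.
  - intro Hall. destruct (proper_out J P) as [w Hw].
    destruct (Hhom x j0) as [h [Hh Hhx]].
    destruct (aut_inv lt Hch h Hh) as [hi [Hhi [Hi1 Hi2]]].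
    apply Hw. rewrite <- (Hi2 w). apply (Hall (hi w)); [exact Hh| rewrite Hhx; exact Hj0].
Qed.

Lemma class_pri J x : proper_regular_interval lt J -> proper_regular_interval lt (simJ lt J x).
Proof.
  intros Hp. pose proof Hp as [I [R P]]. split; [apply class_interval; auto|split].
  - apply class_regular; auto.
  - apply class_proper; auto.
Qed.

Lemma comp_aux A B al be ga : interval lt A -> regular lt A -> interval lt B -> regular lt B ->
  A al -> B al -> A be -> ~ B be -> B ga -> ~ A ga -> lt be al -> lt al ga -> False.
Proof.
  intros [_ CA] RA [_ CB] RB Aal Bal Abe Nbe Bga Nga H1 H2.
  destruct (Hhom be al) as [g [Hg Hgb]].
  destruct (aut_inv lt Hch g Hg) as [gi [Hgi [Gi1 Gi2]]].
  assert (Aga : A (g al)) by (apply (RA be al g); auto; rewrite Hgb; auto).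
  assert (L1 : lt al (g al)) by (assert (L0 : lt (g be) (g al)) by (apply Hg; exact H1); rewrite Hgb in L0; exact L0).
  assert (L2 : lt (g al) ga).
  { destruct (tri lt Hch (g al) ga) as [h|[h|h]]; auto.
    - subst. contradiction.
    - exfalso. apply Nga. apply (CA al ga (g al)); auto. }
  assert (Bga' : B (g al)) by (apply (CB al (g al) ga); auto).
  apply Nbe. rewrite <- (Gi1 be), Hgb.
  apply (RB (g al) al gi); auto. rewrite Gi1. exact Bal.
Qed.

Lemma comparable A B x : interval lt A -> regular lt A -> interval lt B -> regular lt B ->
  A x -> B x -> (forall y, A y -> B y) \/ (forall y, B y -> A y).
Proof.
  intros IA RA IB RB Ax Bx.
  apply NNPP; intro N. apply not_or_and in N as [N1 N2].
  apply not_all_ex_not in N1 as [be N1]. apply not_all_ex_not in N2 as [ga N2].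
  apply imply_to_and in N1 as [Abe Nbe]. apply imply_to_and in N2 as [Bga Nga].
  pose proof IA as [_ CA]. pose proof IB as [_ CB].
  assert (be <> x) by (intro; subst; contradiction).
  assert (ga <> x) by (intro; subst; contradiction).
  destruct (tri lt Hch be x) as [h1|[h1|h1]]; [|contradiction|];
  destruct (tri lt Hch ga x) as [h2|[h2|h2]]; try contradiction.
  - destruct (tri lt Hch be ga) as [h|[h|h]].
    + apply Nga. apply (CA be ga x); auto.
    + subst; contradiction.
    + apply Nbe. apply (CB ga be x); auto.
  - eapply (comp_aux A B x be ga); eauto.
  - eapply (comp_aux B A x ga be); eauto.
  - destruct (tri lt Hch be ga) as [h|[h|h]].
    + apply Nbe. apply (CB x be ga); auto.
    + subst; contradiction.
    + apply Nga. apply (CA x ga be); auto.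
Qed.

Lemma refine J K x : interval lt J -> regular lt J ->
  (forall z, simJ lt J x z -> simJ lt K x z) -> forall a b, simJ lt J a b -> simJ lt K a b.
Proof.
  intros IJ RJ H a b Hab.
  destruct (Hhom x a) as [h [Hh Hhx]].
  destruct (aut_inv lt Hch h Hh) as [hi [Hhi [Hi1 Hi2]]].
  assert (E : simJ lt J x (hi b)).
  { rewrite <- (Hi1 x), Hhx. apply simJ_transport; auto. }
  apply H in E. apply (simJ_transport K h) in E; auto. rewrite Hhx, Hi2 in E. exact E.
Qed.

Lemma classes_comparable J K (x : T) : proper_regular_interval lt J -> proper_regular_interval lt K ->
  (forall a b, simJ lt J a b -> simJ lt K a b) \/ (forall a b, simJ lt K a b -> simJ lt J a b).
Proof.
  intros [IJ [RJ PJ]] [IK [RK PK]].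
  destruct (comparable (simJ lt J x) (simJ lt K x) x) as [H|H];
    auto using class_interval, class_regular, simJ_refl.
  - left. eapply refine; eauto.
  - right. eapply refine; eauto.
Qed.

End Classes.

Section Quot.
Context {T : Type} (lt : T -> T -> Prop).
Hypothesis Hch : is_chain lt.
Hypothesis Hhom : homogeneous lt.
Context (J : T -> Prop).
Hypothesis IJ : interval lt J.
Hypothesis RJ : regular lt J.

Definition cls (x : T) : quot lt J := exist _ (simJ lt J x) (ex_intro _ x eq_refl).
Definition rep (C : quot lt J) : T :=
  proj1_sig (constructive_indefinite_description _ (proj2_sig C)).
Lemma rep_spec C : proj1_sig C = simJ lt J (rep C).
Proof. unfold rep. destruct (constructive_indefinite_description _ _). simpl. exact e. Qed.

Lemma qeq (C D : quot lt J) : proj1_sig C = proj1_sig D -> C = D.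
Proof. destruct C, D; simpl; intros; apply subset_eq_compat; assumption. Qed.

Lemma cls_rep C : cls (rep C) = C.
Proof. apply qeq. simpl. symmetry; apply rep_spec. Qed.

Lemma cls_eq x y : simJ lt J x y -> cls x = cls y.
Proof.
  intro H. apply qeq. simpl. apply functional_extensionality; intro z.
  apply propositional_extensionality; split; intro Hz.
  - apply simJ_trans with x; [apply simJ_sym; auto| exact Hz].
  - apply simJ_trans with y; auto.
Qed.

Lemma cls_eq_inv x y : cls x = cls y -> simJ lt J x y.
Proof.
  intro H. assert (E : simJ lt J x = simJ lt J y) by (apply (f_equal (@proj1_sig _ _)) in H; exact H).
  rewrite E. apply simJ_refl.
Qed.

Lemma mem_cls (C : quot lt J) z : proj1_sig C z -> cls z = C.
Proof.
  intro H. rewrite rep_spec in H. rewrite <- (cls_rep C). symmetry. apply cls_eq; exact H.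
Qed.

Lemma cls_mem (C : quot lt J) z : cls z = C -> proj1_sig C z.
Proof. intros <-. simpl. apply simJ_refl. Qed.

Definition ind (h : T -> T) (C : quot lt J) : quot lt J := cls (h (rep C)).

Lemma ind_cls h x : is_aut lt h -> ind h (cls x) = cls (h x).
Proof.
  intro Hh. unfold ind. apply cls_eq. apply simJ_transport; auto.
  apply cls_eq_inv. apply cls_rep.
Qed.

Lemma ind_comp h g C : is_aut lt h -> is_aut lt g -> ind h (ind g C) = ind (fun x => h (g x)) C.
Proof.
  intros Hh Hg. rewrite <- (cls_rep C). rewrite !ind_cls; auto. apply aut_comp; auto.
Qed.

Lemma ind_aut h : is_aut lt h -> is_aut (quot_lt lt J) (ind h).
Proof.
  intro Hh. destruct (aut_inv lt Hch h Hh) as [hi [Hhi [Hi1 Hi2]]]. split.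
  - exists (ind hi). split; intro C; rewrite <- (cls_rep C); rewrite !ind_cls; auto;
      [rewrite Hi1| rewrite Hi2]; reflexivity.
  - intros C D HCD a b Ha Hb.
    unfold ind in Ha, Hb. simpl in Ha, Hb.
    apply (simJ_transport lt J hi) in Ha; auto. apply (simJ_transport lt J hi) in Hb; auto.
    rewrite Hi1 in Ha, Hb. rewrite <- rep_spec in Ha, Hb.
    pose proof (HCD _ _ Ha Hb) as L. apply Hh in L. rewrite !Hi2 in L. exact L.
Qed.

Lemma quot_lt_cls x y : lt x y -> ~ simJ lt J x y -> quot_lt lt J (cls x) (cls y).
Proof.
  intros Hxy N a b Ha Hb. simpl in Ha, Hb.
  assert (Cx : forall u v w, simJ lt J x u -> simJ lt J x w -> lt u v -> lt v w -> simJ lt J x v)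
    by (apply (proj2 (class_interval lt J x IJ))).
  assert (Cy : forall u v w, simJ lt J y u -> simJ lt J y w -> lt u v -> lt v w -> simJ lt J y v)
    by (apply (proj2 (class_interval lt J y IJ))).
  assert (Sy : forall v, simJ lt J y v -> simJ lt J x v -> False).
  { intros v H1 H2. apply N. apply simJ_trans with v; auto. apply simJ_sym; auto. }
  destruct (tri lt Hch a b) as [h|[h|h]]; auto.
  - subst. exfalso; eauto.
  - exfalso. destruct (tri lt Hch y a) as [h1|[h1|h1]].
    + apply N. apply (Cx x y a); auto using simJ_refl.
    + subst. apply N; auto.
    + destruct (tri lt Hch b x) as [h2|[h2|h2]].
      * apply (Sy x); [|apply simJ_refl]. apply (Cy b x y); auto using simJ_refl.
      * subst. apply (Sy x); auto. apply simJ_refl.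
      * apply (Sy a); auto. apply (Cy b a y); auto using simJ_refl.
Qed.

Context (j0 : T).
Hypothesis Hj0 : J j0.

Definition Hc (C : quot lt J) : T -> T :=
  proj1_sig (constructive_indefinite_description _ (Hhom j0 (rep C))).
Lemma Hc_spec C : is_aut lt (Hc C) /\ Hc C j0 = rep C.
Proof. unfold Hc. destruct (constructive_indefinite_description _ _). exact a. Qed.
Definition Hi (C : quot lt J) : T -> T :=
  proj1_sig (constructive_indefinite_description _ (aut_inv lt Hch _ (proj1 (Hc_spec C)))).
Lemma Hi_spec C : is_aut lt (Hi C) /\ (forall x, Hi C (Hc C x) = x) /\ (forall y, Hc C (Hi C y) = y).
Proof. unfold Hi. destruct (constructive_indefinite_description _ _). exact a. Qed.

Lemma HcJ C y : J y -> cls (Hc C y) = C.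
Proof.
  intro Hy. destruct (Hc_spec C) as [A E]. transitivity (cls (rep C)); [|apply cls_rep]. rewrite <- E.
  symmetry. apply cls_eq. apply simJ_transport; auto. apply simJ_of_in; auto.
Qed.

Lemma HiJ C z : cls z = C -> J (Hi C z).
Proof.
  intro H. destruct (Hc_spec C) as [A E]. destruct (Hi_spec C) as [Ai [I1 I2]].
  rewrite <- (cls_rep C) in H. apply cls_eq_inv in H. apply simJ_sym in H; auto.
  rewrite <- E in H. apply (simJ_transport lt J (Hi C)) in H; auto. rewrite I1 in H.
  apply (simJ_in lt J j0); auto.
Qed.

Definition lift (phi : quot lt J -> quot lt J) (x : T) : T :=
  Hc (phi (cls x)) (Hi (cls x) x).

Lemma lift_cls phi x : cls (lift phi x) = phi (cls x).
Proof. unfold lift. apply HcJ. apply HiJ. reflexivity. Qed.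

Lemma lift_aut phi : is_aut (quot_lt lt J) phi -> is_aut lt (lift phi).
Proof.
  intros Hp. pose proof Hp as [[psi [P1 P2]] Pm].
  assert (Inv : forall f g, (forall C, g (f C) = C) -> forall x, lift g (lift f x) = x).
  { intros f g Hfg x. unfold lift at 1. rewrite lift_cls, Hfg.
    unfold lift. destruct (Hi_spec (f (cls x))) as [_ [I1 _]]. rewrite I1.
    destruct (Hi_spec (cls x)) as [_ [_ I2]]. apply I2. }
  split.
  - exists (lift psi). split; apply Inv; assumption.
  - intros x y Hxy. destruct (classic (simJ lt J x y)) as [S|S].
    + unfold lift. rewrite <- (cls_eq x y S).
      destruct (Hc_spec (phi (cls x))) as [A _]. destruct (Hi_spec (cls x)) as [Ai _].
      apply A, Ai, Hxy.
    + pose proof (Pm _ _ (quot_lt_cls x y Hxy S)) as L.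
      apply L; apply cls_mem; apply lift_cls.
Qed.

End Quot.

Section Key.
Context {T : Type} (lt : T -> T -> Prop).
Hypothesis Hch : is_chain lt.
Hypothesis Hhom : homogeneous lt.

Lemma restrict (I : T -> Prop) g a : regular lt I -> I a -> I (g a) -> is_aut lt g ->
  exists g' : {z | I z} -> {z | I z}, is_aut (sub_lt lt I) g' /\
     forall z, proj1_sig (g' z) = g (proj1_sig z).
Proof.
  intros R Ia Iga Hg.
  destruct (aut_inv lt Hch g Hg) as [gi [Hgi [G1 G2]]].
  assert (F : forall z, I z -> I (g z)) by (intros z Hz; apply (R a z g); auto).
  assert (B : forall z, I z -> I (gi z)).
  { intros z Hz. apply (R (g a) z gi); auto. rewrite G1; auto. }
  exists (fun z => exist I (g (proj1_sig z)) (F _ (proj2_sig z))). split; [|reflexivity].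
  split.
  - exists (fun z => exist I (gi (proj1_sig z)) (B _ (proj2_sig z))). split.
    + intros [z Hz]. apply subset_eq_compat. simpl. apply G1.
    + intros [z Hz]. apply subset_eq_compat. simpl. apply G2.
  - intros [u Hu] [v Hv]. unfold sub_lt. simpl. apply Hg.
Qed.

Lemma sval_inj (I : T -> Prop) (u v : {z | I z}) : proj1_sig u = proj1_sig v -> u = v.
Proof. destruct u, v; simpl; intros; apply subset_eq_compat; assumption. Qed.

Lemma hom_sub (I : T -> Prop) : regular lt I -> homogeneous (sub_lt lt I).
Proof.
  intros R [a Ha] [b Hb]. destruct (Hhom a b) as [g [Hg E]].
  destruct (restrict I g a R Ha (ltac:(rewrite E; exact Hb)) Hg) as [g' [A G]].
  exists g'. split; auto. apply sval_inj. rewrite G. exact E.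
Qed.

Hypothesis Hns : ~ simple lt.
Hypothesis Hsub : forall J : T -> Prop, proper_regular_interval lt J -> ~ simple (sub_lt lt J).

Lemma exists_pri : exists J, proper_regular_interval lt J.
Proof.
  apply NNPP; intro N. apply Hns. split; auto. intros J HJ. apply N. exists J; exact HJ.
Qed.

Lemma exists_pri_at x : exists J, proper_regular_interval lt J /\ J x.
Proof.
  destruct exists_pri as [J HJ]. exists (simJ lt J x). split.
  - apply class_pri; auto.
  - apply simJ_refl.
Qed.

Section AtX.
Context (x : T).
Definition Pat (J : T -> Prop) := proper_regular_interval lt J /\ J x.
Definition Iat (y : T) := forall J, Pat J -> J y.

Lemma Iat_single y : Iat y -> y = x.
Proof.
  intro Hy. apply NNPP; intro Ne.
  assert (Ix : Iat x) by (intros J [_ H]; exact H).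
  assert (IntI : interval lt Iat).
  { split; [exists x; exact Ix|]. intros a b c Ha Hc Hab Hbc J PJ.
    pose proof PJ as [[[_ C] _] _]. apply (C a b c); [apply Ha; exact PJ| apply Hc; exact PJ| |]; auto. }
  assert (RI : regular lt Iat).
  { intros a b g Ha Hb Hg Hga J PJ. pose proof PJ as [[_ [R _]] _].
    apply (R a b g); [apply Ha| apply Hb| | apply Hga]; auto. }
  assert (PI : proper Iat).
  { split.
    - intros [c Hc]. apply Ne. rewrite (proj1 (Hc y) Hy), (proj1 (Hc x) Ix). reflexivity.
    - intro Hall. destruct (exists_pri_at x) as [J0 PJ0].
      pose proof PJ0 as [[_ [_ P0]] _]. destruct (proper_out J0 P0) as [w Hw].
      apply Hw. apply Hall. exact PJ0. }
  assert (PRI : proper_regular_interval lt Iat) by (split; auto).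
  assert (Hs := Hsub Iat PRI).
  assert (HomI := hom_sub Iat RI).
  assert (EK : exists K', proper_regular_interval (sub_lt lt Iat) K').
  { apply NNPP; intro N. apply Hs. split; auto. intros K' HK. apply N. exists K'; exact HK. }
  destruct EK as [K' [[[k' Hk'] CK'] [RK' [PK1 PK2]]]].
  set (K := fun z => exists H : Iat z, K' (exist _ z H)).
  assert (KI : forall z, K z -> Iat z) by (intros z [H _]; exact H).
  assert (KK' : forall z (H : Iat z), K z -> K' (exist _ z H)).
  { intros z H [H' HK]. replace H with H' by apply proof_irrelevance. exact HK. }
  assert (IntK : interval lt K).
  { split.
    - exists (proj1_sig k'). exists (proj2_sig k'). destruct k'; exact Hk'.
    - intros a b c Ha Hc Hab Hbc.
      assert (Ib : Iat b) by (apply (proj2 IntI a b c); auto).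
      exists Ib. destruct Ha as [Ha HKa], Hc as [Hc HKc].
      apply (CK' (exist _ a Ha) (exist _ b Ib) (exist _ c Hc)); auto. }
  assert (RK : regular lt K).
  { intros a b g Ha Hb Hg Hga.
    destruct (restrict Iat g a RI (KI a Ha) (KI _ Hga) Hg) as [g' [A G]].
    destruct Ha as [Ha HKa], Hb as [Hb HKb].
    assert (E1 : g' (exist _ a Ha) = exist _ (g a) (KI _ Hga)) by (apply sval_inj; rewrite G; reflexivity).
    pose proof (RK' _ _ g' HKa HKb A (ltac:(rewrite E1; apply KK'; exact Hga))) as HH.
    assert (Igb : Iat (g b)) by (pose proof (G (exist _ b Hb)) as GG; simpl in GG; rewrite <- GG; apply proj2_sig).
    exists Igb.
    replace (exist Iat (g b) Igb) with (g' (exist _ b Hb)); auto.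
    apply sval_inj. rewrite G. reflexivity. }
  assert (PK : proper K).
  { split.
    - intros [c Hc]. apply PK1. assert (Kc : K c) by (apply (proj2 (Hc c)); reflexivity).
      destruct Kc as [Ic HKc]. exists (exist _ c Ic). intros [z Iz]; split.
      + intro HKz. apply sval_inj. simpl. apply (proj1 (Hc z)). exists Iz; exact HKz.
      + intro E. rewrite E. exact HKc.
    - intro Hall. apply PK2. intros [z Iz]. apply KK'. apply Hall. }
  assert (PRK : proper_regular_interval lt K) by (split; auto).
  apply not_all_ex_not in PK2 as [[w Iw] Nw].
  assert (NKw : ~ K w) by (intro Kw; apply Nw; apply KK'; exact Kw).
  destruct (proj1 IntK) as [k Kk].
  destruct (Hhom k x) as [h [Hh Ehk]].
  destruct (aut_inv lt Hch h Hh) as [hi [Hhi [H1 H2]]].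
  assert (PJ' : Pat (simJ lt K x)) by (split; [apply class_pri; auto| apply simJ_refl]).
  assert (Ihw : Iat (h w)) by (apply (RI k w h); auto; rewrite Ehk; exact Ix).
  pose proof (Ihw _ PJ') as S. apply NKw.
  specialize (S hi Hhi). rewrite <- Ehk, !H1 in S. apply S. exact Kk.
Qed.

Lemma key O : order_open lt O -> O x ->
  exists J, proper_regular_interval lt J /\ forall y, simJ lt J x y -> O y.
Proof.
  intros HO Ox. destruct (HO x Ox) as [l [u [Al [Bu Hlu]]]].
  assert (JL : exists J, Pat J /\ forall z, J z -> above lt l z).
  { destruct l as [a|].
    - simpl in Al. assert (Na : ~ Iat a).
      { intro Ia. apply Iat_single in Ia. subst. apply (irr lt Hch x Al). }
      apply not_all_ex_not in Na as [J NJ]. apply imply_to_and in NJ as [PJ NJa].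
      exists J. split; auto. intros z Jz. simpl.
      pose proof PJ as [[[_ C] _] Jx].
      destruct (tri lt Hch z a) as [h|[h|h]]; auto.
      + exfalso. apply NJa. apply (C z a x); auto.
      + subst. contradiction.
    - destruct (exists_pri_at x) as [J PJ]. exists J. split; auto. }
  assert (JU : exists J, Pat J /\ forall z, J z -> below lt u z).
  { destruct u as [a|].
    - simpl in Bu. assert (Na : ~ Iat a).
      { intro Ia. apply Iat_single in Ia. subst. apply (irr lt Hch x Bu). }
      apply not_all_ex_not in Na as [J NJ]. apply imply_to_and in NJ as [PJ NJa].
      exists J. split; auto. intros z Jz. simpl.
      pose proof PJ as [[[_ C] _] Jx].
      destruct (tri lt Hch z a) as [h|[h|h]]; auto.
      + subst. contradiction.
      + exfalso. apply NJa. apply (C x a z); auto.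
    - destruct (exists_pri_at x) as [J PJ]. exists J. split; auto. }
  destruct JL as [J1 [[[I1 [R1 P1]] X1] H1]]. destruct JU as [J2 [[[I2 [R2 P2]] X2] H2]].
  destruct (comparable lt Hch Hhom J1 J2 x I1 R1 I2 R2 X1 X2) as [S|S].
  - exists J1. split; [split; auto|]. intros y Hy. apply (simJ_in lt J1 x y X1) in Hy. auto.
  - exists J2. split; [split; auto|]. intros y Hy. apply (simJ_in lt J2 x y X2) in Hy. auto.
Qed.
End AtX.

Lemma find_J (s : list (T * (T -> Prop))) :
  (forall p, In p s -> order_open lt (snd p) /\ snd p (fst p)) ->
  exists J, proper_regular_interval lt J /\
    forall p, In p s -> forall y, simJ lt J (fst p) y -> snd p y.
Proof.
  induction s as [|p s IH]; intro Hs.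
  - destruct exists_pri as [J HJ]. exists J. split; auto. intros p [].
  - destruct IH as [J [PJ HJ]]. { intros q Hq. apply Hs. right; exact Hq. }
    destruct (Hs p (or_introl eq_refl)) as [Op Xp].
    destruct (key (fst p) (snd p) Op Xp) as [Jp [PJp HJp]].
    destruct (classes_comparable lt Hch Hhom J Jp (fst p) PJ PJp) as [S|S].
    + exists J. split; auto. intros q [<-|Hq] y Hy; auto.
    + exists Jp. split; auto. intros q [<-|Hq] y Hy; auto.
Qed.
End Key.

Section Main.
Context {T : Type} (lt : T -> T -> Prop).
Hypothesis Hch : is_chain lt.
Hypothesis Hhom : homogeneous lt.

Lemma class_open J r : proper_regular_interval lt J -> order_open lt (simJ lt J r).
Proof.
  intros PJ. pose proof PJ as [IJ [RJ _]]. intros y Hy.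
  destruct (class_proper lt Hch Hhom J y PJ) as [NS _].
  assert (Ez : exists z, simJ lt J y z /\ z <> y).
  { apply NNPP; intro N. apply NS. exists y. intro z; split.
    - intro Hz. apply NNPP; intro Ne. apply N. exists z; auto.
    - intros ->. apply simJ_refl. }
  destruct Ez as [z [Hyz Nz]].
  destruct (Hhom z y) as [g [Hg Eg]].
  assert (Sgy : simJ lt J y (g y)).
  { rewrite <- Eg at 1. apply simJ_transport; auto. apply simJ_sym; auto. }
  assert (Cr := proj2 (class_interval lt J r IJ)).
  assert (Hrz : simJ lt J r z) by (apply simJ_trans with y; auto).
  assert (Hrg : simJ lt J r (g y)) by (apply simJ_trans with y; auto).
  destruct (tri lt Hch z y) as [h|[h|h]]; [| congruence |].
  - exists (Some z), (Some (g y)). simpl.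
    assert (L : lt y (g y)) by (rewrite <- Eg at 1; apply Hg; exact h).
    split; [exact h| split; [exact L|]]. intros w H1 H2. apply (Cr z w (g y)); auto.
  - exists (Some (g y)), (Some z). simpl.
    assert (L : lt (g y) y) by (rewrite <- Eg at 2; apply Hg; exact h).
    split; [exact L| split; [exact h|]]. intros w H1 H2. apply (Cr (g y) w z); auto.
Qed.

Lemma dir1 : roelcke_precompact lt (tau_p_nbhd lt) ->
   forall J : T -> Prop, proper_regular_interval lt J ->
     roelcke_precompact (quot_lt lt J) (tau_d_nbhd (quot_lt lt J)).
Proof.
  intros RP J PJ V [A HA]. pose proof PJ as [IJ [RJ _]].
  destruct (proj1 IJ) as [j0 Hj0].
  set (U := fun g => V (ind lt J g)).
  assert (HU : tau_p_nbhd lt U).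
  { exists (map (fun C => (rep lt J C, proj1_sig C)) A). split.
    - intros p Hp. apply in_map_iff in Hp as [C [<- HC]]. simpl.
      rewrite rep_spec. split; [apply class_open; auto| apply simJ_refl].
    - intros g Hg Hp. unfold U. apply HA; [apply ind_aut; auto|].
      intros a Ha. unfold ind. apply (mem_cls lt Hch Hhom J IJ RJ).
      apply (Hp (rep lt J a, proj1_sig a)). apply in_map_iff. exists a; auto. }
  destruct (RP U HU) as [F [HF1 HF2]].
  exists (map (ind lt J) F). split.
  - intros f Hf. apply in_map_iff in Hf as [f0 [<- Hf0]]. apply ind_aut; auto.
  - intros phi Hphi.
    set (u := lift lt Hch Hhom J j0 phi).
    assert (Au : is_aut lt u) by (apply lift_aut; auto).
    destruct (HF2 u Au) as [u1 [u2 [f [A1 [U1 [A2 [U2 [Inf Eq]]]]]]]].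
    exists (ind lt J u1), (ind lt J u2), (ind lt J f).
    assert (Af : is_aut lt f) by auto.
    split; [apply ind_aut; auto|]. split; [exact U1|].
    split; [apply ind_aut; auto|]. split; [exact U2|].
    split; [apply in_map_iff; exists f; auto|].
    intro C. rewrite <- (cls_rep lt J C).
    rewrite !(ind_cls lt Hch Hhom J IJ RJ); auto.
    rewrite <- Eq. symmetry. apply (lift_cls lt Hch Hhom J IJ RJ j0 Hj0).
Qed.

Hypothesis Hns : ~ simple lt.
Hypothesis Hsub : forall J : T -> Prop, proper_regular_interval lt J -> ~ simple (sub_lt lt J).

Lemma dir2 : (forall J : T -> Prop, proper_regular_interval lt J ->
     roelcke_precompact (quot_lt lt J) (tau_d_nbhd (quot_lt lt J))) ->
  roelcke_precompact lt (tau_p_nbhd lt).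
Proof.
  intros RPq U [s [Hs HU]].
  destruct (find_J lt Hch Hhom Hns Hsub s Hs) as [J [PJ HJ]].
  pose proof PJ as [IJ [RJ _]]. destruct (proj1 IJ) as [j0 Hj0].
  set (V := fun phi : quot lt J -> quot lt J =>
              forall p, In p s -> phi (cls lt J (fst p)) = cls lt J (fst p)).
  assert (HV : tau_d_nbhd (quot_lt lt J) V).
  { exists (map (fun p => cls lt J (fst p)) s). intros phi _ H p Hp. apply H.
    apply in_map_iff. exists p; auto. }
  destruct (RPq J PJ V HV) as [F' [HF1 HF2]].
  set (lf := lift lt Hch Hhom J j0).
  assert (LC : forall phi x, cls lt J (lf phi x) = phi (cls lt J x))
    by (intros; apply lift_cls; auto).
  assert (IC : forall h x, is_aut lt h -> ind lt J h (cls lt J x) = cls lt J (h x))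
    by (intros; apply ind_cls; auto).
  exists (map lf F'). split.
  - intros f Hf. apply in_map_iff in Hf as [f0 [<- Hf0]]. apply lift_aut; auto.
  - intros g Hg.
    destruct (HF2 (ind lt J g) (ind_aut lt Hch Hhom J IJ RJ g Hg))
      as [v1 [v2 [f' [A1 [V1 [A2 [V2 [Inf Eq]]]]]]]].
    set (u2 := lf v2). set (f := lf f').
    assert (Au2 : is_aut lt u2) by (apply lift_aut; auto).
    assert (Af : is_aut lt f) by (apply lift_aut; auto).
    destruct (aut_inv lt Hch u2 Au2) as [u2i [Au2i [I1 I2]]].
    destruct (aut_inv lt Hch f Af) as [fi [Afi [J1 J2]]].
    exists (fun x => g (u2i (fi x))), u2, f.
    assert (Au1 : is_aut lt (fun x => g (u2i (fi x)))) by (apply aut_comp; [exact Hg| apply aut_comp; assumption]).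
    split; [exact Au1|]. split.
    + apply HU; auto. intros p Hp. apply (HJ p Hp).
      apply (cls_eq_inv lt J). rewrite <- IC by auto. rewrite Eq.
      unfold u2 in I2. rewrite <- LC. fold u2. rewrite I2.
      unfold f in J2. rewrite <- LC. fold f. rewrite J2. symmetry. apply V1. exact Hp.
    + split; [exact Au2|]. split.
      * apply HU; auto. intros p Hp. apply (HJ p Hp).
        apply (cls_eq_inv lt J). unfold u2. rewrite LC. symmetry. apply V2. exact Hp.
      * split; [apply in_map_iff; exists f'; auto|].
        intro x. rewrite J1, I1. reflexivity.
Qed.

End Main.

Theorem theorem5p3 (T : Type) (lt : T -> T -> Prop) :
  is_chain lt ->
  homogeneous lt ->
  ~ simple lt ->
  (forall J : T -> Prop, proper_regular_interval lt J -> ~ simple (sub_lt lt J)) ->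
  (roelcke_precompact lt (tau_p_nbhd lt) <->
   forall J : T -> Prop, proper_regular_interval lt J ->
     roelcke_precompact (quot_lt lt J) (tau_d_nbhd (quot_lt lt J))).
Proof.
  intros Hch Hhom Hns Hsub. split.
  - apply dir1; auto.
  - apply dir2; auto.
Qed.
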